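(* For every positive integer $n$, $l_1(n)=a_1(n)=2^{n-1}$.
   Context: For a positive integer $m$, the triangle $T_m$ is an array whose row $x$ ($x=1,2,\dots$) has $x$ entries, in columns $0,\dots,x-1$. Row $1$ is the single entry $1$. For $x>1$, row $x$ is obtained from row $x-1$ by rotating it cyclically left by $m$ positions (the entry in column $c$ of row $x-1$ moves to column $(c-m)\bmod(x-1)\in\{0,\dots,x-2\}$ of row $x$), then appending in column $x-1$ a new entry equal to $1$ plus the entry in column $0$ of row $x-1$. $T_m(x,c)$ denotes the entry in row $x$, column $c$. Define $l_m(1)=1$ and, for $n\ge2$, $l_m(n)=\min\{x>l_m(n-1): T_m(x,0)=1\}$ (the rows headed by the value $1$); define $a_m(n)=\min\{x\in\mathbb{N}: T_m(x,x-1)=n\}$ (the row in which the value $n$ first appears). Here $m=1$. *)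

(* Defs.v *)
From mathcomp Require Import all_boot.
Set Implicit Arguments. Unset Strict Implicit. Unset Printing Implicit Defensive.

(* Row x of T_m (x >= 1) as a sequence of length x, columns 0..x-1.
   row_m 0 represents row 1 = [:: 1]; row_m (k+1) (row k+2) is obtained from
   row k+1 by rotating left by m positions (cyclically, i.e. by m mod (k+1))
   and appending 1 + (entry in column 0 of the previous row). *)
Fixpoint trow (m k : nat) : seq nat :=
  match k with
  | 0 => [:: 1]
  | k'.+1 => let r := trow m k' in
             rot (m %% size r) r ++ [:: (head 0 r).+1]
  end.

Definition T (m x c : nat) : nat := nth 0 (trow m x.-1) c.

Definition is_least (P : nat -> Prop) (x : nat) : Prop :=
  P x /\ forall y, P y -> x <= y.

(* l_rel m n x  <->  l_m(n) = x  (recursive definition of l_m). *)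
Inductive l_rel (m : nat) : nat -> nat -> Prop :=
| l_one : l_rel m 1 1
| l_succ n p x : 1 <= n -> l_rel m n p ->
    is_least (fun y => p < y /\ T m y 0 = 1) x -> l_rel m n.+1 x.

Definition a_is (m n x : nat) : Prop :=
  is_least (fun y => 1 <= y /\ T m y y.-1 = n) x.

(* Main.v *)
Require Import Defs.
From mathcomp Require Import all_boot.
From mathcomp Require Import zify.

Fixpoint pca (f j : nat) : nat :=
  if f is f'.+1 then j %% 2 + pca f' (j %/ 2) else 0.
Definition pc j := pca j j.

Lemma pca0 f : pca f 0 = 0.
Proof. by elim: f => //= f ->. Qed.

Lemma pca_eq f g j : j <= f -> j <= g -> pca f j = pca g j.
Proof.
elim: f g j => [|f IH] [|g] j /= hf hg.
- by [].
- have -> : j = 0 by lia. by rewrite pca0.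
- have -> : j = 0 by lia. by rewrite pca0.
- by rewrite (IH g) //; lia.
Qed.

Lemma pc_half j : pc j = j %% 2 + pc (j %/ 2).
Proof.
rewrite /pc; case: j => [|j] //=; congr (_ + _); apply: pca_eq; lia.
Qed.

Lemma pc_dbl r : pc (2 * r) = pc r.
Proof. rewrite pc_half; have -> : (2 * r) %% 2 = 0 by lia.
have -> : (2 * r) %/ 2 = r by lia. by []. Qed.

Lemma pc_dbl1 r : pc (2 * r).+1 = (pc r).+1.
Proof. rewrite pc_half; have -> : (2 * r).+1 %% 2 = 1 by lia.
have -> : (2 * r).+1 %/ 2 = r by lia. by []. Qed.

Lemma pc_bound k j : j < 2 ^ k -> pc j <= k.
Proof.
elim: k j => [|k IH] j hj.
- have -> : j = 0 by rewrite expn0 in hj; lia. by [].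
- rewrite pc_half; have := IH (j %/ 2); rewrite expnS in hj; lia.
Qed.

Lemma pc_bound_strict k j : j.+1 < 2 ^ k -> pc j < k.
Proof.
elim: k j => [|k IH] j hj.
- rewrite expn0 in hj; lia.
- rewrite pc_half; rewrite expnS in hj.
  case/boolP: (j %% 2 == 0) => /eqP h.
  + have := pc_bound k (j %/ 2); lia.
  + have := IH (j %/ 2); lia.
Qed.

Lemma pc_pos j : 0 < j -> 0 < pc j.
Proof.
have : j < 2 ^ j by apply: ltn_expl.
move: {2}j => k; elim: k j => [|k IH] j hj hj0.
- rewrite expn0 in hj; lia.
- rewrite pc_half; rewrite expnS in hj.
  case/boolP: (j %% 2 == 0) => /eqP h; last lia.
  have := IH (j %/ 2); lia.
Qed.

Lemma pc_full k : pc (2 ^ k).-1 = k.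
Proof.
elim: k => [|k IH] //.
have -> : (2 ^ k.+1).-1 = (2 * (2 ^ k).-1).+1.
  rewrite expnS; have := expn_gt0 2 k; lia.
by rewrite pc_dbl1 IH.
Qed.

Definition b j := (pc j).+1.
Definition bs n := map b (iota 0 n).

Lemma size_trow m k : size (trow m k) = k.+1.
Proof. elim: k => [|k IH] //=. by rewrite size_cat size_rot IH addn1. Qed.

Lemma trowS x : 0 < x ->
  trow 1 x.+1 = rot 1 (trow 1 x) ++ [:: (head 0 (trow 1 x)).+1].
Proof. move=> hx /=; rewrite size_trow modn_small //. Qed.

Lemma bsS n : bs n.+1 = rcons (bs n) (b n).
Proof. by rewrite /bs -addn1 iotaD map_cat cats1. Qed.

Lemma nth_bs n i : i < n -> nth 0 (bs n) i = b i.
Proof. move=> h; rewrite /bs (nth_map 0) ?size_iota // nth_iota //. Qed.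

Lemma size_bs n : size (bs n) = n.
Proof. by rewrite /bs size_map size_iota. Qed.

Lemma closed k r : 0 < r <= 2 ^ k ->
  trow 1 (2 ^ k + r).-1 = drop r (bs (2 ^ k)) ++ bs (2 * r).
Proof.
elim: k r => [|k IHk] r.
- move=> h; have -> : r = 1 by rewrite expn0 in h; lia. by [].
elim: r => [|r IHr] //= hr.
have hp := expn_gt0 2 k.
case: (posnP r) => [r0|rpos].
- subst r.
  have := IHk (2 ^ k); rewrite leqnn hp => /(_ isT).
  have -> : (2 ^ k + 2 ^ k).-1 = (2 ^ k.+1).-1 by rewrite expnS; lia.
  rewrite drop_oversize ?size_bs // cat0s => E.
  have -> : (2 ^ k.+1 + 1).-1 = ((2 ^ k.+1).-1).+1 by rewrite expnS; lia.
  rewrite trowS; last by rewrite expnS; lia.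
  rewrite E mul2n.
  have -> : (2 ^ k).*2 = 2 ^ k.+1 by rewrite expnS mul2n.
  have hk : 0 < 2 ^ k.+1 by rewrite expn_gt0.
  rewrite /bs; case: (2 ^ k.+1) hk => [|q] // _.
  by rewrite /= rot1_cons drop0 -cats1 -catA.
- have E := IHr (andb_true_intro (conj rpos (ltnW hr))).
  have -> : (2 ^ k.+1 + r.+1).-1 = ((2 ^ k.+1 + r).-1).+1 by lia.
  rewrite trowS; last lia.
  rewrite E (drop_nth 0); last by rewrite size_bs.
  rewrite nth_bs //= rot1_cons.
  rewrite -cats1 -!catA; congr (_ ++ _).
  have -> : 2 * r.+1 = (2 * r).+2 by lia.
  rewrite !bsS -!cats1 -catA /=.
  by rewrite /b pc_dbl pc_dbl1.
Qed.

Lemma T0 k r : 0 < r <= 2 ^ k -> T 1 (2 ^ k + r) 0 = if r < 2 ^ k then b r else 1.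
Proof.
move=> h; rewrite /T closed // nth_cat size_drop size_bs.
case: (ltnP r (2 ^ k)) => hr.
- have -> : 0 < 2 ^ k - r by lia.
  by rewrite nth_drop addn0 nth_bs.
- have -> : 2 ^ k - r = 0 by lia.
  by rewrite /= nth_bs //; lia.
Qed.

Lemma Tlast k r : 0 < r <= 2 ^ k -> T 1 (2 ^ k + r) (2 ^ k + r).-1 = b (2 * r).-1.
Proof.
move=> h; rewrite /T closed // nth_cat size_drop size_bs.
have -> : ((2 ^ k + r).-1 < 2 ^ k - r) = false by lia.
rewrite nth_bs; last lia.
congr b; lia.
Qed.

Lemma decomp y : 2 <= y -> exists k r, 0 < r <= 2 ^ k /\ y = 2 ^ k + r.
Proof.
elim: y => [|y IH] // hy.
case: (ltnP y 2) => hy2.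
- exists 0, 1; split => //; lia.
- have [k [r [hr ->]]] := IH hy2.
  case: (ltnP r (2 ^ k)) => hrk.
  + exists k, r.+1; split; lia.
  + exists k.+1, 1; split; first by rewrite expn_gt0.
    rewrite expnS; lia.
Qed.

Lemma T0_one y : 1 <= y -> T 1 y 0 = 1 -> exists k, y = 2 ^ k.
Proof.
move=> hy; case: (ltnP y 2) => hy2.
- by exists 0; lia.
- have [k [r [hr ->]]] := @decomp _ hy2.
  rewrite T0 //; case: ifP => hrk.
  + rewrite /b; have := @pc_pos r; lia.
  + move=> _; exists k.+1; rewrite expnS; lia.
Qed.

Lemma T0_pow k : T 1 (2 ^ k) 0 = 1.
Proof.
case: k => [|k] //.
have -> : 2 ^ k.+1 = 2 ^ k + 2 ^ k by rewrite expnS; lia.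
rewrite T0 ?ltnn //; rewrite expn_gt0 /=; lia.
Qed.

Theorem mainTheorem15 (n : nat) : 1 <= n ->
  l_rel 1 n (2 ^ n.-1) /\ a_is 1 n (2 ^ n.-1).
Proof.
move=> hn; split.
- elim: n hn => [|n IH] // _.
  case: (posnP n) => [->|npos]; first exact: l_one.
  apply: (l_succ (p := 2 ^ n.-1)) => //; first exact: IH.
  split.
  + split; last exact: T0_pow.
    rewrite ltn_exp2l //; lia.
  + move=> y [hlt h1].
    have [k ek] := @T0_one y ltac:(have := expn_gt0 2 n.-1; lia) h1.
    subst y; move: hlt; rewrite ltn_exp2l // leq_exp2l //; lia.
- split.
  + split; first by rewrite expn_gt0.
    case: n hn => [|[|n]] // _.
    have -> : 2 ^ n.+2.-1 = 2 ^ n + 2 ^ n by rewrite /= expnS; lia.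
    rewrite Tlast; last by rewrite expn_gt0 leqnn.
    have -> : (2 * 2 ^ n).-1 = (2 * (2 ^ n).-1).+1 by have := expn_gt0 2 n; lia.
    by rewrite /b pc_dbl1 pc_full.
  + move=> y [hy1 hyl].
    case: (ltnP y 2) => hy2.
    * have ey : y = 1 by lia. subst y.
      move: hyl; rewrite /T /= => <-; by [].
    * have [k [r [hr ey]]] := @decomp _ hy2; subst y.
      move: hyl; rewrite Tlast // => hb.
      have e2 : (2 * r).-1 = (2 * r.-1).+1 by lia.
      rewrite e2 in hb.
      rewrite /b pc_dbl1 in hb.
      rewrite leqNgt; apply/negP => hlt.
      have hk : k.+2 <= n.
        have : 2 ^ k < 2 ^ n.-1 by lia.
        rewrite ltn_exp2l //; lia.
      case: (ltnP r (2 ^ k)) => hrk.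
      - have := @pc_bound_strict k r.-1 ltac:(lia). lia.
      - have hr2 : r = 2 ^ k by lia.
        have : 2 ^ k.+1 < 2 ^ n.-1 by rewrite expnS; lia.
        rewrite ltn_exp2l // => hk2.
        have := @pc_bound k r.-1 ltac:(lia). lia.
Qed.
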